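(* Let $1\le k\le N-1$ satisfy $\phi^{k-1}-\phi^k>\phi^k-\phi^{k+1}$, let $F\in\tilde{\mathcal F}^k$, let $\mathcal U$ be an atom of $\mathfrak A_k$, and let $\delta$ be a root of $F$ with $\mathcal U\subseteq\mathcal VT^F_\delta$. Then there exist a set $\mathcal D\subseteq\mathcal VT^F_\delta$ and a forest $G\in\tilde{\mathcal F}^k$ such that the arcs leaving the vertices of $\mathcal N\setminus\mathcal D$ are the same in $G$ and in $F$, $\mathcal U\subseteq\mathcal VT^G_\delta$, and $\mathcal N^{in}_{\mathcal U}(G)=\emptyset$ (no arc of $G$ enters $\mathcal U$).
   Context: $V$ is a digraph with vertex set $\mathcal N$, $|\mathcal N|=N$, real arc weights, having at least one spanning tree. An (entering) forest is a digraph in which every vertex has at most one outgoing arc and there is no directed cycle; its weakly connected components are trees, each with a root (the unique vertex with no outgoing arc). For a root $\delta$ of $F$, $T^F_\delta$ denotes the tree of $F$ containing $\delta$. $\mathcal F^k$ is the set of spanning forests of $V$ with exactly $k$ trees; $\Upsilon^F$ is total arc weight; $\phi^k=\min_{\mathcal F^k}\Upsilon^F$, $\phi^0=\infty$; $\tilde{\mathcal F}^k$ the forests in $\mathcal F^k$ of weight $\phi^k$. $\mathfrak A_k$ is the algebra of subsets of $\mathcal N$ generated by the vertex sets of trees of forests in $\tilde{\mathcal F}^k$; atoms are its minimal nonempty elements. $\mathcal N^{in}_{\mathcal U}(G)$ is the set of tails of arcs of $G$ whose head is in $\mathcal U$ and tail is not. *)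

(* Defs.v *)
From mathcomp Require Import all_boot all_order all_algebra.
Set Implicit Arguments. Unset Strict Implicit. Unset Printing Implicit Defensive.
Import Order.TTheory GRing.Theory Num.Theory.
Local Open Scope ring_scope.

Section Forests.
Variables (R : realFieldType) (T : finType).
(* The digraph V: vertex set T (N = #|T|), arc relation [arc], weights [w]. *)
Variables (arc : rel T) (w : T -> T -> R).

(* A spanning subgraph in which every vertex has at most one outgoing arc is
   encoded by F : {ffun T -> option T}: F x = Some y iff (x,y) is an arc of F;
   F x = None iff x has no outgoing arc. *)
Definition step (F : {ffun T -> option T}) (o : option T) : option T :=
  obind F o.

(* Acyclic: following outgoing arcs from any vertex terminates (a directed
   cycle would make the walk run forever; otherwise it ends within N steps). *)
Definition acyclic (F : {ffun T -> option T}) : bool :=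
  [forall x, iter #|T| (step F) (Some x) == None].

Definition is_spanning_forest (F : {ffun T -> option T}) : bool :=
  [forall x, forall y, (F x == Some y) ==> arc x y] && acyclic F.

Definition forest_roots (F : {ffun T -> option T}) : {set T} := [set x | F x == None].

Definition forests (k : nat) : {set {ffun T -> option T}} :=
  [set F | is_spanning_forest F & #|forest_roots F| == k].

Definition weight (F : {ffun T -> option T}) : R :=
  \sum_(x : T) (if F x is Some y then w x y else 0).

(* min on option R with None = +infinity *)
Definition omin (a b : option R) : option R :=
  match a, b with
  | None, _ => b
  | _, None => a
  | Some x, Some y => Some (Order.min x y)
  end.

(* phi k = min weight of a forest with k trees; None stands for +oo
   (the case F^k empty, in particular phi 0 = +oo). *)
Definition phi (k : nat) : option R :=
  \big[omin/None]_(F in forests k) Some (weight F).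

Definition opt_forests (k : nat) : {set {ffun T -> option T}} :=
  [set F in forests k | phi k == Some (weight F)].

(* phi^{k-1} - phi^k > phi^k - phi^{k+1}, with the convention that
   (+oo) - a > b for all finite a, b. *)
Definition gap_cond (k : nat) : Prop :=
  match phi k.-1, phi k, phi k.+1 with
  | None, Some _, Some _ => True
  | Some a, Some b, Some c => b - c < a - b
  | _, _, _ => False
  end.

Definition reach (F : {ffun T -> option T}) (x y : T) : bool :=
  [exists n : 'I_#|T|, iter n (step F) (Some x) == Some y].

Definition VT (F : {ffun T -> option T}) (d : T) : {set T} :=
  [set x | reach F x d].

Definition alg_gens (k : nat) : {set {set T}} :=
  [set A | [exists F in opt_forests k, exists d in forest_roots F, A == VT F d]].

Definition set_algebra_closed (C : {set {set T}}) : bool :=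
  [forall A in C, ~: A \in C] && [forall A in C, forall B in C, A :|: B \in C].

Definition gen_algebra (G : {set {set T}}) : {set {set T}} :=
  \bigcap_(C : {set {set T}} | (G \subset C) && set_algebra_closed C) C.

Definition alg (k : nat) : {set {set T}} := gen_algebra (alg_gens k).

Definition is_atom (Al : {set {set T}}) (U : {set T}) : Prop :=
  [/\ U \in Al, U != set0 &
      forall V, V \in Al -> V != set0 -> V \subset U -> V = U].

Definition has_spanning_tree : Prop := exists F, F \in forests 1.

End Forests.

(* Main.v *)
Require Import Defs.
From mathcomp Require Import all_boot all_order all_algebra.
Import Order.TTheory GRing.Theory Num.Theory.
From mathcomp Require Import zify lra.
From Stdlib Require Import Classical.
Set Implicit Arguments. Unset Strict Implicit. Unset Printing Implicit Defensive.

Section Basics.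
Variable T : finType.
Implicit Types (F G K : {ffun T -> option T}).

Lemma iter_None F n : iter n (step F) None = None.
Proof. by elim: n => //= n ->. Qed.

Lemma step_Some F v : step F (Some v) = F v.
Proof. by []. Qed.

Lemma acyc_big F n x : acyclic F -> (#|T| <= n)%N -> iter n (step F) (Some x) = None.
Proof.
move=> /forallP /(_ x) /eqP H le; rewrite -(subnK le) iterD H; exact: iter_None.
Qed.

Definition reachN F x y := exists n, iter n (step F) (Some x) = Some y.

Lemma reachP F x y : acyclic F -> reach F x y <-> reachN F x y.
Proof.
move=> ac; split.
  by case/existsP=> n /eqP H; exists n.
case=> n H; apply/existsP.
have lt : (n < #|T|)%N.
  rewrite ltnNge; apply/negP=> le; by rewrite acyc_big in H.
by exists (Ordinal lt); apply/eqP.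
Qed.

Lemma reachN_refl F x : reachN F x x.
Proof. by exists 0%N. Qed.

Lemma reachN_trans F x y z : reachN F x y -> reachN F y z -> reachN F x z.
Proof. by case=> n Hn [m Hm]; exists (m + n)%N; rewrite iterD Hn. Qed.

Lemma reachN_arc F x y : F x = Some y -> reachN F x y.
Proof. by move=> H; exists 1%N. Qed.

Lemma reachN_cons F x y z : F x = Some y -> reachN F y z -> reachN F x z.
Proof. by move=> H; apply: reachN_trans; apply: reachN_arc. Qed.

Lemma reachN_inv F x z : reachN F x z -> x = z \/ exists y, F x = Some y /\ reachN F y z.
Proof.
case=> [[|n]]; first by case=> ->; left.
rewrite iterSr step_Some; case E: (F x) => [y|]; last by rewrite iter_None.
by move=> H; right; exists y; split => //; exists n.
Qed.

Lemma reachN_root F x z : F x = None -> reachN F x z -> z = x.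
Proof. by move=> H /reachN_inv [->//|[y [Hy _]]]; rewrite H in Hy. Qed.

Lemma closed_reach F (B : pred T) : (forall v y, B v -> F v = Some y -> B y) ->
  forall v y, B v -> reachN F v y -> B y.
Proof.
move=> HB v y Bv [n]; elim: n y => [|n IH] y /=; first by case=> <-.
case E: (iter n (step F) (Some v)) => [c|] //= Hc.
by apply: HB Hc; apply: IH.
Qed.

Lemma rank_iter F (r : T -> nat) : (forall v y, F v = Some y -> (r y < r v)%N) ->
  forall m a b, iter m (step F) (Some a) = Some b -> (r b + m <= r a)%N.
Proof.
move=> Hr; elim=> [|m IH] a b /=; first by case=> ->; rewrite addn0.
case E: (iter m (step F) (Some a)) => [c|] //= Hc.
have := IH _ _ E; have := Hr _ _ Hc; rewrite addnS; move=> h1 h2.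
exact: leq_trans (leq_add h1 (leqnn m)) h2.
Qed.

Lemma rank_acyclic F (r : T -> nat) : (forall v y, F v = Some y -> (r y < r v)%N) ->
  acyclic F.
Proof.
move=> Hr; apply/forallP=> x; apply/eqP.
case E: (iter #|T| (step F) (Some x)) => [z|] //; exfalso.
have Hall : forall i, (i <= #|T|)%N -> exists c, iter i (step F) (Some x) = Some c.
  move=> i le; case Ei: (iter i (step F) (Some x)) => [c|]; first by exists c.
  by move: E; rewrite -(subnK le) iterD Ei iter_None.
pose f (i : 'I_#|T|.+1) := odflt x (iter i (step F) (Some x)).
have fE : forall i : 'I_#|T|.+1, iter i (step F) (Some x) = Some (f i).
  move=> i; have [c Hc] := Hall i (ltn_ord i); by rewrite /f Hc.
have inj : injective f.
  move=> i j Hij; apply/eqP; apply/negPn/negP => neq.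
  wlog lt : i j Hij neq / (i < j)%N.
    move=> Hw; case: (ltngtP i j) => h; first exact: (Hw i j).
    - by apply: (Hw j i) => //; rewrite eq_sym.
    - by move: neq; rewrite (val_inj h) eqxx.
  have : iter (j - i + i)%N (step F) (Some x) = Some (f j) by rewrite subnK ?fE // ltnW.
  rewrite iterD fE Hij => /(rank_iter Hr).
  by rewrite -{2}(addn0 (r (f j))) leq_add2l leqn0 subn_eq0 leqNgt lt.
by have := @leq_card _ _ f inj; rewrite card_ord ltnn.
Qed.

Lemma acyclic_rank F : acyclic F -> exists r : T -> nat,
  (forall v, (r v < #|T|)%N) /\ (forall v y, F v = Some y -> (r y < r v)%N).
Proof.
move=> ac.
have ex : forall v, exists n, iter n (step F) (Some v) == None.
  by move=> v; exists #|T|; rewrite acyc_big.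
pose m v := ex_minn (ex v).
have mP : forall v, iter (m v) (step F) (Some v) = None /\
   forall n, iter n (step F) (Some v) = None -> (m v <= n)%N.
  move=> v; rewrite /m; case: ex_minnP => n /eqP Hn Hmin; split=> // n' Hn'.
  by apply: Hmin; apply/eqP.
have m_pos : forall v, (0 < m v)%N.
  by move=> v; case: (mP v); case: (m v).
have m_le : forall v, (m v <= #|T|)%N.
  by move=> v; case: (mP v) => _; apply; rewrite acyc_big.
exists (fun v => (m v).-1); split.
  by move=> v; have := m_pos v; have := m_le v; case: (m v).
move=> v y Hv.
have h1 : (m v <= (m y).+1)%N.
  by case: (mP v) => _; apply; rewrite iterSr step_Some Hv; case: (mP y).
have h2 : (m y <= (m v).-1)%N.
  case: (mP y) => _; apply; case: (mP v); have := m_pos v.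
  by case: (m v) => // n _; rewrite iterSr step_Some Hv.
have := m_pos y; have := m_pos v.
case: (m v) h1 h2 => // a; case: (m y) => // b /= h1 h2 _ _.

Qed.

Lemma reach_root F x : acyclic F -> exists r, F r = None /\ reachN F x r.
Proof.
move=> ac; have [rk [_ Hr]] := acyclic_rank ac.
move: {2}(rk x) (leqnn (rk x)) => n; elim: n x => [|n IH] x le.
  case E: (F x) => [y|]; last by exists x; split => //; apply: reachN_refl.
  by have := Hr _ _ E; rewrite ltnNge (leq_trans le (leq0n _)).
case E: (F x) => [y|]; last by exists x; split => //; apply: reachN_refl.
have [r [Hr1 Hr2]] := IH y (leq_trans (Hr _ _ E) le).
by exists r; split => //; apply: reachN_cons E Hr2.
Qed.

End Basics.

Section More.
Variable T : finType.
Implicit Types (F G K : {ffun T -> option T}).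

Lemma reachN_comp F v a b : reachN F v a -> reachN F v b -> reachN F a b \/ reachN F b a.
Proof.
case=> n Hn [m Hm]; case: (leqP n m) => le.
  left; exists (m - n)%N; by rewrite -Hn -iterD subnK.
right; exists (n - m)%N; rewrite -Hm -iterD subnK //; exact: ltnW.
Qed.

Lemma root_uniq F v p q : F p = None -> F q = None -> reachN F v p -> reachN F v q -> p = q.
Proof.
move=> Hp Hq rp rq; case: (reachN_comp rp rq) => h.
  by rewrite (reachN_root Hp h).
by rewrite (reachN_root Hq h).
Qed.

End More.

Section Alg.
Variables (R : realFieldType) (T : finType) (arc : rel T) (w : T -> T -> R) (k : nat).
Implicit Types (F G K : {ffun T -> option T}).
Local Notation alg := (alg arc w k).
Local Notation gens := (alg_gens arc w k).
Local Notation opt := (opt_forests arc w k).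

Lemma opt_acyclic G : G \in opt -> acyclic G.
Proof. by rewrite !inE => /andP [/andP [/andP [_ ->] _] _]. Qed.

Lemma opt_roots G : G \in opt -> #|forest_roots G| = k.
Proof. by rewrite !inE => /andP [/andP [_ /eqP ->] _]. Qed.

Lemma opt_phi G : G \in opt -> phi arc w k = Some (weight w G).
Proof. by rewrite !inE => /andP [_ /eqP ->]. Qed.

Lemma gens_alg A : A \in gens -> A \in alg.
Proof. by move=> HA; apply/bigcapP => C /andP [sub _]; apply: (subsetP sub). Qed.

Lemma algC A : A \in alg -> ~: A \in alg.
Proof.
move=> /bigcapP HA; apply/bigcapP => C HC; have AC := HA C HC.
move: HC => /andP [sub /andP [/forallP c1 _]].
by have := c1 A; rewrite AC.
Qed.

Lemma algU A B : A \in alg -> B \in alg -> A :|: B \in alg.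
Proof.
move=> /bigcapP HA /bigcapP HB; apply/bigcapP => C HC; have AC := HA C HC.
have BC := HB C HC; move: HC => /andP [sub /andP [_ /forallP c2]].
by have := c2 A; rewrite AC => /forallP /(_ B); rewrite BC.
Qed.

Lemma algI A B : A \in alg -> B \in alg -> A :&: B \in alg.
Proof.
move=> HA HB; rewrite -[A :&: B]setCK setCI; apply: algC; apply: algU; exact: algC.
Qed.

Definition equiv (a b : T) := [forall A in gens, (a \in A) == (b \in A)].

Lemma alg_resp A a b : A \in alg -> equiv a b -> (a \in A) = (b \in A).
Proof.
move=> /bigcapP HA eab.
pose C0 := [set E : {set T} | [forall a, forall b, equiv a b ==> ((a \in E) == (b \in E))]].
have : A \in C0.
  apply: HA; apply/andP; split.
    apply/subsetP => E HE; rewrite inE; apply/forallP => a'; apply/forallP => b'.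
    by apply/implyP => /forallP /(_ E); rewrite HE.
  apply/andP; split.
    apply/forallP => E; apply/implyP; rewrite !inE => /forallP HE.
    apply/forallP => a'; apply/forallP => b'; apply/implyP => e.
    by have := HE a' => /forallP /(_ b'); rewrite e !inE /= => /eqP ->.
  apply/forallP => E; apply/implyP; rewrite !inE => /forallP HE.
  apply/forallP => E'; apply/implyP; rewrite !inE => /forallP HE'.
  apply/forallP => a'; apply/forallP => b'; apply/implyP => e.
  rewrite !inE; have := HE a' => /forallP /(_ b'); rewrite e => /eqP ->.
  by have := HE' a' => /forallP /(_ b'); rewrite e => /eqP ->.
rewrite inE => /forallP /(_ a) /forallP /(_ b); rewrite eab => /eqP.
exact.
Qed.

Lemma VT_gens G d : G \in opt -> d \in forest_roots G -> VT G d \in gens.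
Proof.
move=> HG Hd; rewrite inE; apply/existsP; exists G; rewrite HG /=.
by apply/existsP; exists d; rewrite Hd eqxx.
Qed.

Lemma VTP G d x : G \in opt -> (x \in VT G d) <-> reachN G x d.
Proof. by move=> HG; rewrite inE; apply: reachP; apply: opt_acyclic. Qed.

Lemma frootP G d : (d \in forest_roots G) = (G d == None).
Proof. by rewrite inE. Qed.

Lemma atom_tree U G d u : is_atom alg U -> G \in opt -> d \in forest_roots G ->
  u \in U -> u \in VT G d -> U \subset VT G d.
Proof.
case=> UA Un0 Umin HG Hd uU ud.
have I : U :&: VT G d \in alg by apply: algI => //; apply: gens_alg; apply: VT_gens.
have := Umin _ I; rewrite subsetIl => E.
rewrite -E; [exact: subsetIr| |]; last by [].
by apply/set0Pn; exists u; rewrite inE uU.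
Qed.

Lemma atom_sep U x : is_atom alg U -> x \notin U ->
  exists K p, [/\ K \in opt, p \in forest_roots K, x \in VT K p & U :&: VT K p = set0].
Proof.
move=> At xU; case: (At) => UA Un0 Umin.
have [u uU] := set0Pn _ Un0.
have ne : ~~ equiv x u.
  apply/negP => e; have := alg_resp UA e; by rewrite uU (negbTE xU).
have [A HA sep] : exists2 A, A \in gens & (x \in A) != (u \in A).
  move: ne; rewrite /equiv negb_forall => /existsP [A]; rewrite negb_imply => /andP [h1 h2].
  by exists A.
have AI : U :&: A \in alg by apply: algI => //; apply: gens_alg.
move: (HA); rewrite inE => /existsP [K /andP [HK /existsP [p /andP [Hp /eqP AE]]]].
case xA: (x \in A) sep; rewrite /= => uA.
  exists K, p; split => //; first by rewrite -AE.
  apply/eqP; apply/negPn/negP => n0.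
  rewrite -AE in n0; have := Umin _ AI n0 (subsetIl _ _) => E.
  have : u \in U :&: A by rewrite E.
  by rewrite inE uU /=; move: uA => /[swap] ->.
have UAs : U \subset A.
  have E : U :&: A = U.
    apply: Umin => //; last exact: subsetIl.
    apply/set0Pn; exists u; rewrite inE uU /=; by move: uA; case: (u \in A).
  by rewrite -E subsetIr.
have acK := opt_acyclic HK.
have [q [Hq rq]] := reach_root x acK.
exists K, q; split => //; first by rewrite frootP Hq.
  by apply/(VTP _ _ HK).
apply/eqP; apply/negPn/negP => /set0Pn [v]; rewrite inE => /andP [vU /(VTP _ _ HK) vq].
have : v \in A by apply: (subsetP UAs).
rewrite AE => /(VTP _ _ HK) vp.
have pq : p = q by apply: (root_uniq (F:=K)) vp vq; [apply/eqP; rewrite -frootP|].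
by move: xA; rewrite AE; move/negbT/negP; apply; apply/(VTP _ _ HK); rewrite pq.
Qed.

End Alg.

Section Phi.
Variables (R : realFieldType) (T : finType) (arc : rel T) (w : T -> T -> R).
Local Open Scope ring_scope.

Lemma omin_le (a : R) o : exists c, @omin R (Some a) o = Some c /\ c <= a /\
  (forall b, o = Some b -> c <= b).
Proof.
case: o => [b|]; last by exists a; split => //; split => //.
exists (Order.min a b); split => //; split; first by rewrite ge_min lexx.
by move=> b' [<-]; rewrite ge_min lexx orbT.
Qed.

Lemma big_omin_le (I : eqType) (r : seq I) (P : pred I) (f : I -> R) i :
  i \in r -> P i -> exists c, \big[@omin R/None]_(j <- r | P j) Some (f j) = Some c /\ c <= f i.
Proof.
elim: r => [//|a r IH]; rewrite in_cons big_cons => /orP [/eqP <-|ir] Pi.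
  rewrite Pi; have [c [-> [h _]]] := omin_le (f i) (\big[@omin R/None]_(j <- r | P j) Some (f j)).
  by exists c.
have [c [E h]] := IH ir Pi.
case: (P a); last by exists c.
have [c' [-> [_ h']]] := omin_le (f a) (\big[@omin R/None]_(j <- r | P j) Some (f j)).
by exists c'; split => //; apply: le_trans (h' _ E) h.
Qed.

Lemma phi_le k' G : G \in forests arc k' -> exists c, phi arc w k' = Some c /\ c <= weight w G.
Proof.
move=> HG; rewrite /phi; apply: big_omin_le => //; exact: mem_index_enum.
Qed.

End Phi.

Section Main.
Variables (R : realFieldType) (T : finType) (arc : rel T) (w : T -> T -> R) (k : nat).
Variables (F : {ffun T -> option T}) (U : {set T}) (d : T).
Hypothesis gap : gap_cond arc w k.
Hypothesis At : is_atom (alg arc w k) U.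
Hypothesis HF : F \in opt_forests arc w k.
Local Notation opt := (opt_forests arc w k).
Implicit Types (G K : {ffun T -> option T}).

Definition CG G := [set v | [exists u in U, reach G v u]].
Definition mix (X : {set T}) G K : {ffun T -> option T} :=
  [ffun v => if v \in X then K v else G v].

Definition inv G := [/\ G \in opt, (forall x, x \notin VT F d -> G x = F x),
   d \in forest_roots G & U \subset VT G d].

Lemma VTo G (HG : G \in opt) v e : (v \in VT G e) <-> reachN G v e.
Proof. exact: (@VTP R T arc w k G e v HG). Qed.


Lemma CGP G v : acyclic G -> (v \in CG G) <-> exists2 u, u \in U & reachN G v u.
Proof.
move=> ac; rewrite inE; split.
  by case/existsP => u /andP [uU /(reachP _ _ ac) h]; exists u.
by case=> u uU h; apply/existsP; exists u; rewrite uU /=; apply/(reachP _ _ ac).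
Qed.

Lemma spanning_mix X G K : is_spanning_forest arc G -> is_spanning_forest arc K ->
  acyclic (mix X G K) -> is_spanning_forest arc (mix X G K).
Proof.
move=> /andP [/forallP HG _] /andP [/forallP HK _] ac; rewrite /is_spanning_forest ac andbT.
apply/forallP => x; apply/forallP => y; rewrite ffunE.
by case: (x \in X); [have := HK x | have := HG x] => /forallP /(_ y).
Qed.

Lemma weight_mix X G K :
  (weight w (mix X G K) + weight w (mix X K G) = weight w G + weight w K)%R.
Proof.
rewrite /weight -!big_split /=; apply: eq_bigr => v _; rewrite !ffunE.
by case: (v \in X) => //; rewrite addrC.
Qed.

Lemma roots_mix X G K :
  forest_roots (mix X G K) = (forest_roots G :\: X) :|: (forest_roots K :&: X).
Proof. by apply/setP => v; rewrite !inE ffunE; case: (v \in X); rewrite ?andbT ?andbF ?orbF. Qed.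


Lemma step_lemma G x : inv G -> x \notin U -> x \in CG G ->
  exists G', inv G' /\ CG G' \proper CG G.
Proof.
case=> HG agree Hd HUG xU xC.
have acG := opt_acyclic HG.
have [K [p [HK Hp xP UP]]] := atom_sep At xU.
have acK := opt_acyclic HK.
set P := VT K p in xP UP.
set C := CG G in xC.
set X := C :&: P.
have Pm : forall v, v \in P <-> reachN K v p by move=> v; exact: (@VTP R T arc w k K p v HK).
have Kp : K p = None by apply/eqP; rewrite -frootP.
have Gd : G d = None by apply/eqP; rewrite -frootP.
have f3 : forall v y, v \notin C -> G v = Some y -> y \notin C.
  move=> v y vC Hv; apply/negP => /(CGP _ acG) [u uU ru]; move/negP: vC; apply.
  by apply/(CGP _ acG); exists u => //; apply: reachN_cons Hv ru.
have f4 : forall v y, v \in C -> v \notin U -> G v = Some y -> y \in C.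
  move=> v y /(CGP _ acG) [u uU ru] vU Hv; apply/(CGP _ acG); exists u => //.
  case: (reachN_inv ru) => [e|[y' [Hy' ry']]]; first by move: vU; rewrite e uU.
  by rewrite Hv in Hy'; case: Hy' => ->.
have f5 : forall v y, v \in P -> K v = Some y -> y \in P.
  move=> v y /Pm rv Hv; apply/Pm.
  case: (reachN_inv rv) => [e|[y' [Hy' ry']]]; first by rewrite e Kp in Hv.
  by rewrite Hv in Hy'; case: Hy' => ->.
have f6 : forall v y, v \notin P -> K v = Some y -> y \notin P.
  move=> v y vP Hv; apply/negP => /Pm ry; move/negP: vP; apply; apply/Pm.
  exact: reachN_cons Hv ry.
have f7 : forall v, v \in X -> v \notin U.
  move=> v; rewrite /X inE => /andP [_ vP]; apply/negP => vU.
  have : v \in U :&: P by rewrite inE vU.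
  by rewrite UP inE.
have UC : forall u, u \in U -> u \in C.
  by move=> u uU; apply/(CGP _ acG); exists u => //; apply: reachN_refl.
have [rG [rGb rGd]] := acyclic_rank acG.
have [rK [rKb rKd]] := acyclic_rank acK.
set M := mix X G K.
set M' := mix X K G.
have ME : forall v, M v = if (v \in C) && (v \in P) then K v else G v.
  by move=> v; rewrite /M /mix ffunE inE.
have M'E : forall v, M' v = if (v \in C) && (v \in P) then G v else K v.
  by move=> v; rewrite /M' /mix ffunE inE.
have acM : acyclic M.
  apply: (@rank_acyclic _ _ (fun v => if v \in C then (if v \in P then #|T| + rK v else 2 * #|T| + rG v)
                                  else rG v)%N).
  move=> v y; rewrite ME.
  case vC: (v \in C); case vP: (v \in P) => /= Hv.
  - have yP := f5 _ _ vP Hv; rewrite yP; have := rKd _ _ Hv; have := rGb y.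
    case: (y \in C)=> /= h1 h2; clear -h1 h2; lia.
  - have := rGd _ _ Hv; have := rKb y; have := rGb y.
    case: (y \in C); case: (y \in P) => /= h1 h2 h3; clear -h1 h2 h3; lia.
  - have := f3 _ _ (negbT vC) Hv; move/negbTE => ->; exact: rGd Hv.
  - have := f3 _ _ (negbT vC) Hv; move/negbTE => ->; exact: rGd Hv.
have acM' : acyclic M'.
  apply: (@rank_acyclic _ _ (fun v => if v \in P then (if v \in C then #|T| + rG v else 2 * #|T| + rK v)
                                  else rK v)%N).
  move=> v y; rewrite M'E.
  case vC: (v \in C); case vP: (v \in P) => /= Hv.
  - have vU : v \notin U by apply: f7; rewrite /X inE vC vP.
    rewrite (f4 _ _ vC vU Hv); have := rGd _ _ Hv; have := rKb y.
    case: (y \in P)=> /= h1 h2; clear -h1 h2; lia.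
  - have := f6 _ _ (negbT vP) Hv; move/negbTE => ->; exact: rKd Hv.
  - have yP := f5 _ _ vP Hv; rewrite yP; have := rKd _ _ Hv; have := rGb y.
    case: (y \in C)=> /= h1 h2; clear -h1 h2; lia.
  - have := f6 _ _ (negbT vP) Hv; move/negbTE => ->; exact: rKd Hv.
have XGr : forall v, v \in X -> G v <> None.
  move=> v vX Gv; have := f7 _ vX; move: vX; rewrite /X inE => /andP [/(CGP _ acG) [u uU ru] _].
  by rewrite -(reachN_root Gv ru) uU.
have rootsM : forest_roots M = forest_roots G :|: (forest_roots K :&: X).
  rewrite /M roots_mix; congr (_ :|: _); apply/setP => v; rewrite !inE.
  case E: (G v) => [y|]; rewrite /= ?andbF ?andbT //; apply/negP => h; apply: (XGr v _ E); by rewrite /X !inE.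
have GX0 : forest_roots G :&: X = set0.
  apply/setP => v; rewrite !inE; case E: (G v) => [y|] //=.
  by apply/negP => h; apply: (XGr v _ E); rewrite /X /C /P !inE.
have rootsM' : forest_roots M' = forest_roots K :\: X.
  by rewrite /M' roots_mix GX0 setU0.
have jle : (#|forest_roots K :&: X| <= 1)%N.
  rewrite -(cards1 p); apply: subset_leq_card; apply/subsetP => v.
  rewrite !inE => /andP [/eqP Kv /andP [_ /(reachP _ _ acK) rv]].
  by rewrite (reachN_root Kv rv).
have cardM : #|forest_roots M| = (k + #|forest_roots K :&: X|)%N.
  rewrite rootsM cardsU (opt_roots HG) setICA GX0 setI0 cards0 subn0 //.
have cardM' : #|forest_roots M'| = (k - #|forest_roots K :&: X|)%N.
  by rewrite rootsM' -(opt_roots HK) -(cardsID X (forest_roots K)) addKn.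
have spG : is_spanning_forest arc G by move: HG; rewrite !inE => /andP [/andP [-> _] _].
have spK : is_spanning_forest arc K by move: HK; rewrite !inE => /andP [/andP [-> _] _].
have spM := spanning_mix spG spK acM.
have spM' := spanning_mix spK spG acM'.
have wGK : weight w K = weight w G.
  by have := opt_phi HK; rewrite (opt_phi HG) => -[->].
have wMM := weight_mix X G K; rewrite -/M -/M' wGK in wMM.
have MO : M \in opt.
  move: jle cardM cardM'; case: #|_| => [|[|//]] _ cM cM'; last first.
    exfalso.
    have FM : M \in forests arc k.+1 by rewrite inE spM cM addn1 /=.
    have FM' : M' \in forests arc k.-1 by rewrite inE spM' cM' subn1 /=.
    have [c [Ec hc]] := phi_le w FM.
    have [a [Ea ha]] := phi_le w FM'.
    move: gap; rewrite /gap_cond Ea Ec (opt_phi HG) => h.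
    clear -h hc ha wMM; lra.
  have FM : M \in forests arc k by rewrite inE spM cM addn0 /=.
  have FM' : M' \in forests arc k by rewrite inE spM' cM' subn0 /=.
  have [c [Ec hc]] := phi_le w FM'.
  rewrite (opt_phi HG) in Ec; case: Ec => Ec; subst c.
  have [c [Ec' hc']] := phi_le w FM.
  rewrite (opt_phi HG) in Ec'; case: Ec' => Ec'; subst c.
  rewrite inE FM (opt_phi HG) /=; apply/eqP; congr Some; lra.
have acF := opt_acyclic HF.
have outF : forall v, v \notin VT F d -> ~ reachN G v d.
  move=> v vS rv.
  have HB : forall a b, a \notin VT F d -> G a = Some b -> b \notin VT F d.
    move=> a b aS Ha; have Fa : F a = Some b by rewrite -agree.
    apply/negP => /(VTo HF _ _) rb; move/negP: aS; apply.
    apply/(VTo HF _ _); exact: (reachN_cons Fa rb).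
  have := closed_reach (B := fun v => v \notin VT F d) HB vS rv => /=.
  by move/negP; apply; apply/(VTo HF _ _); apply: reachN_refl.
have XS : forall v, v \in X -> v \in VT F d.
  move=> v; rewrite /X inE => /andP [/(CGP _ acG) [u uU ru] _].
  apply/negPn/negP => vS; apply: (outF _ vS); apply: reachN_trans ru _.
  by apply/(VTo HG _ _); apply: (subsetP HUG).
have MX : forall v, v \notin X -> M v = G v.
  by move=> v vX; rewrite /M /mix ffunE (negbTE vX).
have dX : d \notin X by apply/negP => dX; exact: XGr dX Gd.
have HdM : d \in forest_roots M by rewrite frootP MX // Gd.
case: (At) => _ Un0 _.
have [u0 u0U] := set0Pn _ Un0.
case: (arg_minnP rG u0U) => u' u'U0 minu'0.
have u'U : u' \in U by exact: u'U0.
have minu' : forall j, j \in U -> (rG u' <= rG j)%N by move=> j jU; exact: minu'0.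
clear u'U0 minu'0.
have avoid : forall n z, iter n (step G) (Some u') = Some z -> z \notin X.
  case=> [|n] z Hz.
    move: Hz => /= [e]; apply/negP => /f7; by rewrite -e u'U.
  have h1 := rank_iter rGd Hz.
  apply/negP => zX; have := zX; rewrite /X inE => /andP [/(CGP _ acG) [u2 u2U [m Hm]] _].
  have h2 := rank_iter rGd Hm; have h3 := minu' _ u2U.
  clear -h1 h2 h3; lia.
have iterMG : forall n, iter n (step M) (Some u') = iter n (step G) (Some u').
  elim=> // n IH; rewrite !iterS IH.
  case E: (iter n (step G) (Some u')) => [z|] //=.
  by rewrite MX //; apply: avoid E.
have u'M : u' \in VT M d.
  have := subsetP HUG _ u'U => /(VTo HG _ _) [n Hn].
  by apply/(VTo MO _ _); exists n; rewrite iterMG.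
have UM := atom_tree At MO HdM u'U u'M.
exists M; split.
  split => // v vS; rewrite MX; first exact: agree.
  by apply/negP => /XS; rewrite (negbTE vS).
have acM2 := opt_acyclic MO.
have Xm : forall v, (v \in X) = (v \in C) && (v \in P) by move=> v; rewrite /X in_setI.
have clB : forall a b, (a \notin C) || (a \in X) -> M a = Some b -> (b \notin C) || (b \in X).
  move=> a b; rewrite !Xm ME.
  case aC: (a \in C); case aP: (a \in P) => //= _ Ha.
  - by rewrite (f5 _ _ aP Ha) andbT orNb.
  - by rewrite (negbTE (f3 _ _ (negbT aC) Ha)).
  - by rewrite (negbTE (f3 _ _ (negbT aC) Ha)).
have CM : forall v, v \in CG M -> (v \in C) && (v \notin X).
  move=> v /(CGP _ acM2) [u uU ru].
  case B: ((v \notin C) || (v \in X)).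
    have := closed_reach (B := fun v => (v \notin C) || (v \in X)) clB B ru.
    by rewrite UC //= => /f7; rewrite uU.
  by move: B; case: (v \in C); case: (v \in X).
apply/properP; split.
  by apply/subsetP => v /CM /andP [].
exists x => //; apply/negP => /CM /andP [_]; by rewrite /X inE xC xP.
Qed.


Lemma main_ind n G : (#|CG G| <= n)%N -> inv G ->
  exists G', inv G' /\ (forall x y, x \notin U -> G' x = Some y -> y \notin U).
Proof.
elim: n G => [|n IH] G le HG;
  (case: (classic (forall x y, x \notin U -> G x = Some y -> y \notin U)) => [H|H];
   [by exists G|]);
  (have [x [y [xU [Gx yU]]]] : exists x y, x \notin U /\ G x = Some y /\ y \in U by
    apply: NNPP => Hne; apply: H => x y xU Gx; apply/negP => yU; apply: Hne;
    exists x, y);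
  (have xC : x \in CG G by
    case: HG => HG0 _ _ _; apply/(CGP _ (opt_acyclic HG0)); exists y => //;
    exact: reachN_arc);
  have [G' [HG' pr]] := step_lemma HG xU xC; have := proper_card pr.
- by rewrite ltnNge (leq_trans le (leq0n _)).
- move=> lt; apply: (IH G') => //; rewrite -ltnS; exact: leq_trans lt le.
Qed.

End Main.

Local Open Scope ring_scope.

Theorem theorem4 (R : realFieldType) (T : finType) (arc : rel T)
    (w : T -> T -> R) (k : nat) (F : {ffun T -> option T}) (U : {set T}) (d : T) :
  has_spanning_tree arc ->
  (1 <= k)%N -> (k <= #|T| - 1)%N ->
  gap_cond arc w k ->
  F \in opt_forests arc w k ->
  is_atom (alg arc w k) U ->
  d \in forest_roots F ->
  U \subset VT F d ->
  exists (D : {set T}) (G : {ffun T -> option T}),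
    [/\ D \subset VT F d,
        G \in opt_forests arc w k,
        (forall x, x \notin D -> G x = F x),
        d \in forest_roots G /\ U \subset VT G d &
        (forall x y, x \notin U -> G x = Some y -> y \notin U)].
Proof.
move=> _ _ _ gap HF At Hd HU.
have I0 : inv arc w k F U d F by split.
have [G [[HG ag HdG HUG] ne]] := main_ind gap At HF (leqnn _) I0.
by exists (VT F d), G; split.
Qed.
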